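(* Let $\alpha$ be a countably infinite order type and $S$ a sierpinskisation of $\alpha$ and $\omega$. Assume $\alpha=\omega\alpha'+n$ where $n<\omega$. Then there is a subset of $S$ which (with the induced order) is the direct sum $S'\oplus F$ of a sierpinskisation $S'$ of $\omega\alpha'$ and $\omega$ with an $n$-element poset $F$.
   Context: A sierpinskisation of a countable order type $\beta$ and $\omega$ is a poset whose order is the intersection of two linear orders on its underlying set, one of type $\beta$ and one of type $\omega$. $\omega\alpha'$ denotes the ordered sum of $\alpha'$ copies of the chain $\omega$, and $\omega\alpha'+n$ is followed by an $n$-element chain. The direct sum $A\oplus B$ of posets is their disjoint union in which elements of $A$ are incomparable to elements of $B$. *)

(* Defs.v *)
From mathcomp Require Import all_boot.
Set Implicit Arguments. Unset Strict Implicit. Unset Printing Implicit Defensive.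

Definition linear_order (T : Type) (R : T -> T -> Prop) : Prop :=
  [/\ (forall x, R x x),
      (forall x y, R x y -> R y x -> x = y),
      (forall x y z, R x y -> R y z -> R x z)
    & (forall x y, R x y \/ R y x)].

Definition order_iso (T U : Type) (R : T -> T -> Prop) (Q : U -> U -> Prop) : Prop :=
  exists f : T -> U, bijective f /\ forall x y, R x y <-> Q (f x) (f y).

Definition omega_le (m n : nat) : Prop := (m <= n)%N.

(* The order type omega * alpha' : alpha' copies of omega (lexicographic on B * nat,
   the B-coordinate being the more significant one). *)
Definition omega_times (B : Type) (RB : B -> B -> Prop) (x y : B * nat) : Prop :=
  (RB x.1 y.1 /\ x.1 <> y.1) \/ (x.1 = y.1 /\ (x.2 <= y.2)%N).

Definition omega_times_plus (B : Type) (RB : B -> B -> Prop) (n : nat)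
  (x y : (B * nat) + 'I_n) : Prop :=
  match x, y with
  | inl a, inl b => omega_times RB a b
  | inl _, inr _ => True
  | inr _, inl _ => False
  | inr i, inr j => (i <= j)%N
  end.

Definition sierpinskisation (X : Type) (P : X -> X -> Prop)
  (Bt : Type) (RB : Bt -> Bt -> Prop) : Prop :=
  exists L1 L2 : X -> X -> Prop,
    [/\ linear_order L1, linear_order L2,
        order_iso L1 RB, order_iso L2 omega_le
      & forall x y, P x y <-> L1 x y /\ L2 x y].

Definition induced (X : Type) (Y : X -> Prop) (P : X -> X -> Prop)
  (x y : {x : X | Y x}) : Prop := P (proj1_sig x) (proj1_sig y).
Arguments omega_times_plus {B} RB n x y.
Arguments induced {X} Y P x y.

(* Main.v *)
Require Import Defs.
Set Implicit Arguments. Unset Strict Implicit.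
From mathcomp Require Import all_boot.
From mathcomp Require Import zify.
From Stdlib Require Import ProofIrrelevance.

Definition rank (S : pred nat) k := count S (iota 0 k).

Lemma rankS (S : pred nat) k : rank S k.+1 = rank S k + S k.
Proof. by rewrite /rank -addn1 iotaD count_cat /= add0n addn0. Qed.

Lemma rank_mono (S : pred nat) k d : rank S k <= rank S (k + d).
Proof.
elim: d => [|d IH]; first by rewrite addn0.
by rewrite addnS rankS (leq_trans IH) // leq_addr.
Qed.

Lemma rank_lt (S : pred nat) k k' : S k -> k < k' -> rank S k < rank S k'.
Proof.
move=> Sk lt; rewrite -(subnKC lt).
apply: leq_trans (rank_mono _ _ _); by rewrite rankS Sk addn1.
Qed.

Lemma rank_inj (S : pred nat) k k' : S k -> S k' -> rank S k = rank S k' -> k = k'.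
Proof.
move=> Sk Sk' E; case: (ltngtP k k') => // H.
  by have := @rank_lt S _ _ Sk H; rewrite E ltnn.
by have := @rank_lt S _ _ Sk' H; rewrite E ltnn.
Qed.

Lemma rank_le (S : pred nat) k k' : S k -> S k' -> (k <= k') = (rank S k <= rank S k').
Proof.
move=> Sk Sk'; case: (leqP k k') => H.
  by rewrite -(subnKC H) rank_mono.
by have := @rank_lt S _ _ Sk' H; rewrite ltnNge => /negbTE ->.
Qed.

Definition unbounded (S : pred nat) := forall N, exists k, N <= k /\ S k.

Lemma rank_unb (S : pred nat) : unbounded S -> forall r, exists m, r < rank S m.
Proof.
move=> U; elim=> [|r [m Hm]].
  case: (U 0) => k [_ Sk]; exists k.+1; by rewrite rankS Sk addn1.
case: (U m) => k [le Sk]; exists k.+1; rewrite rankS Sk addn1 ltnS.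
apply: leq_trans Hm _; rewrite -(subnKC le); exact: rank_mono.
Qed.

Lemma rank_surj (S : pred nat) : unbounded S -> forall r, exists k, S k && (rank S k == r).
Proof.
move=> U r; have ex := rank_unb U r.
case: (ex_minnP ex) => m Hm Hmin.
case: m Hm Hmin => [|m] Hm Hmin; first by rewrite /rank in Hm.
have H1 : ~~ (r < rank S m).
  apply/negP => H; have := Hmin m H; by rewrite ltnn.
exists m; move: Hm H1; rewrite rankS; case: (S m) => /=; lia.
Qed.

Definition sel (S : pred nat) (U : unbounded S) r := ex_minn (rank_surj U r).
Lemma selS (S : pred nat) (U : unbounded S) r : S (sel U r).
Proof. by rewrite /sel; case: ex_minnP => m /andP[]. Qed.
Lemma selR (S : pred nat) (U : unbounded S) r : rank S (sel U r) = r.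
Proof. by rewrite /sel; case: ex_minnP => m /andP[_ /eqP]. Qed.

Lemma inj_unb (h : nat -> nat) : injective h -> forall M, unbounded (fun k => M <= h k).
Proof.
move=> hi M N.
case E: (has (fun k => M <= h k) (iota N M.+1)).
  move/hasP: E => [k kin hk]; exists k; rewrite mem_iota in kin.
  by case/andP: kin.
exfalso.
have: size (map h (iota N M.+1)) <= size (iota 0 M).
  apply uniq_leq_size; first by rewrite map_inj_uniq // iota_uniq.
  move=> y /mapP [k kin ->]; rewrite mem_iota /= add0n.
  move/hasPn: E => E; have := E k kin; by rewrite -ltnNge.
by rewrite size_map !size_iota ltnn.
Qed.

Lemma sig_eq T (Q : T -> Prop) (u v : {x | Q x}) : proj1_sig u = proj1_sig v -> u = v.
Proof. case: u => x p; case: v => y q /= E; subst y; f_equal; apply proof_irrelevance. Qed.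

Lemma lin_ind X (Y : X -> Prop) R : linear_order R -> linear_order (induced Y R).
Proof.
case=> r a t c; split; rewrite /induced.
- by move=> x; apply r.
- by move=> x y H1 H2; apply: sig_eq; apply a.
- by move=> x y z; apply t.
- by move=> x y; apply c.
Qed.

Theorem lemma2p7
  (A : Type) (RA : A -> A -> Prop)
  (HA : linear_order RA)
  (Acount : exists f : A -> nat, injective f)
  (Ainf : exists g : nat -> A, injective g)
  (B : Type) (RB : B -> B -> Prop) (HB : linear_order RB) (n : nat)
  (Hdec : order_iso RA (omega_times_plus RB n))
  (X : Type) (P : X -> X -> Prop)
  (HS : sierpinskisation P RA) :
  exists Y1 Y2 : X -> Prop,
    [/\ (forall x, Y1 x -> Y2 x -> False),
        (forall x y, Y1 x -> Y2 y -> ~ P x y /\ ~ P y x),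
        sierpinskisation (induced Y1 P) (omega_times RB)
      & exists h : {x : X | Y2 x} -> 'I_n, bijective h].
Proof.
case: HS => L1 [L2 [lin1 lin2 [f [fbij fiso]] [p2 [p2bij p2iso]] HP]].
case: Hdec => phi [phibij phiiso].
pose F1 := phi \o f.
have F1bij : bijective F1 by apply: bij_comp.
case: F1bij => G1 FG GF.
case: p2bij => g2 pg gp.
have L1E : forall x y, L1 x y <-> omega_times_plus RB n (F1 x) (F1 y).
  move=> x y; rewrite /F1 /=; split => H.
    by apply (proj1 (phiiso _ _)), (proj1 (fiso _ _)).
  by apply (proj2 (fiso _ _)), (proj2 (phiiso _ _)).
pose M := (\max_(i < n) p2 (G1 (inr i))).+1.
have HM : forall i, p2 (G1 (inr i)) < M.
  by move=> i; rewrite ltnS; apply: (leq_bigmax i).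
pose Y1 := fun x => is_true (M <= p2 x).
pose Y2 := fun x => match F1 x with inl _ => False | inr _ => True end.
have Y2lt : forall x, Y2 x -> p2 x < M.
  move=> x; rewrite /Y2; case E: (F1 x) => [a|i] // _.
  by rewrite -(FG x) E.
have Y1inl : forall x, Y1 x -> exists b k, F1 x = inl (b,k).
  move=> x Hx; case E: (F1 x) => [[b k]|i]; first by eauto.
  have: Y2 x by rewrite /Y2 E.
  by move/Y2lt; rewrite ltnNge Hx.
exists Y1, Y2; split.
- move=> x H1 H2; have := Y2lt x H2; by rewrite ltnNge H1.
- move=> x y H1 H2; have Hy := Y2lt y H2.
  case: (Y1inl x H1) => b [k Ex].
  split => /HP [l1 l2].
    move/p2iso: l2; rewrite /omega_le => le; move: H1; rewrite /Y1; lia.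
  move/L1E: l1; rewrite Ex; move: H2; rewrite /Y2; by case: (F1 y).
- have [b0 _] : exists b0 : B, True.
    have Hg : Y1 (g2 M) by rewrite /Y1 gp.
    by case: (Y1inl _ Hg) => b [k _]; exists b.
  pose S := fun b => (fun k => M <= p2 (G1 (inl (b,k)))) : pred nat.
  have U : forall b, unbounded (S b).
    move=> b; apply: inj_unb => k1 k2 /(can_inj pg) /(can_inj GF) [] //.
  exists (induced Y1 L1), (induced Y1 L2); split.
  + exact: lin_ind.
  + exact: lin_ind.
  + pose Phi := fun x : {x | Y1 x} => match F1 (proj1_sig x) with
        inl (b,k) => (b, rank (S b) k) | inr _ => (b0,0) end.
    pose Psi := fun br : B * nat =>
      exist Y1 (G1 (inl (br.1, sel (U br.1) br.2))) (selS (U br.1) br.2).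
    have SY : forall x b k, Y1 x -> F1 x = inl (b,k) -> S b k.
      by move=> x b k Hx E; rewrite /S /= -E FG.
    exists Phi; split.
      exists Psi.
        move=> [x Hx]; apply: sig_eq => /=.
        case: (Y1inl x Hx) => b [k E].
        rewrite /Phi /= E /=.
        by rewrite (rank_inj (selS (U b) _) (SY _ _ _ Hx E) (selR (U b) _)) -E FG.
      by move=> [b r]; rewrite /Phi /Psi /= GF /= selR.
    move=> [x Hx] [y Hy]; rewrite /induced /=.
    case: (Y1inl x Hx) => b [k Ex]; case: (Y1inl y Hy) => b' [k' Ey].
    have Sk := SY _ _ _ Hx Ex; have Sk' := SY _ _ _ Hy Ey.
    apply: (iff_trans (L1E x y)); rewrite /Phi /= Ex Ey /= /omega_times /=.
    split; case=> [H|[eb le]]; [left | right | left | right] => //;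
      subst b'; split => //.
      by rewrite -rank_le.
    by rewrite (rank_le Sk Sk').
  + exists (fun x => p2 (proj1_sig x) - M); split.
      have Hg : forall k, Y1 (g2 (k + M)) by move=> k; rewrite /Y1 gp leq_addl.
      exists (fun k => exist Y1 (g2 (k + M)) (Hg k)).
        by move=> [x Hx]; apply: sig_eq => /=; rewrite subnK // pg.
      by move=> k /=; rewrite gp addnK.
    move=> [x Hx] [y Hy]; rewrite /induced /= /omega_le; move: Hx Hy; rewrite /Y1 => Hx Hy.
    split => H.
      by move/p2iso: H; rewrite /omega_le; lia.
    by apply/p2iso; rewrite /omega_le; lia.
  + by move=> x y; rewrite /induced; exact: HP.
- have Y2G : forall i, Y2 (G1 (inr i)) by move=> i; rewrite /Y2 GF.
  pose h := fun u : {x | Y2 x} =>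
    match F1 (proj1_sig u) as s return
       (match s with inl _ => False | inr _ => True end) -> 'I_n with
     | inl _ => fun H => False_rect _ H
     | inr i => fun _ => i end (proj2_sig u).
  have hE : forall u i, F1 (proj1_sig u) = inr i -> h u = i.
    move=> [x p] i /= E; rewrite /h /=; move: p; rewrite /Y2 E => p //.
  exists h; exists (fun i => exist Y2 (G1 (inr i)) (Y2G i)).
    move=> [x p]; apply: sig_eq => /=.
    have [j E] : exists j, F1 x = inr j.
      by move: p; rewrite /Y2; case: (F1 x) => [a|j] //; exists j.
    by rewrite (hE (exist Y2 x p) j E) -E FG.
  by move=> i; apply: hE => /=; rewrite GF.
Qed.
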